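(* Let $n\ge 1$, $p\ge 0$ be integers and let $S\subseteq\mathbb{R}^n\times\mathbb{R}^p$ be permutation-invariant with respect to $x$. Let $S_0=S\cap\{(u,z)\in\mathbb{R}^n\times\mathbb{R}^p\mid u_1\ge u_2\ge\dots\ge u_n\}$. Then $$\mathrm{conv}(S)=\{(x,z)\in\mathbb{R}^n\times\mathbb{R}^p\mid \exists u\in\mathbb{R}^n \text{ such that } (u,z)\in\mathrm{conv}(S_0) \text{ and } u\ge_m x\}.$$
   Context: A set $S\subseteq\mathbb{R}^n\times\mathbb{R}^p$ is permutation-invariant with respect to $x$ if $(x,z)\in S$ implies $(Px,z)\in S$ for every $n\times n$ permutation matrix $P$. For $x\in\mathbb{R}^n$, $x_{[i]}$ denotes the $i$-th largest component of $x$. For $x,y\in\mathbb{R}^n$, $x\ge_m y$ ($x$ majorizes $y$) means $\sum_{i=1}^j x_{[i]}\ge\sum_{i=1}^j y_{[i]}$ for $j=1,\dots,n-1$ and $\sum_{i=1}^n x_{[i]}=\sum_{i=1}^n y_{[i]}$. $\mathrm{conv}$ denotes convex hull. *)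

(* Defs.v *)
(* Real numbers are an arbitrary realFieldType R (the
   statement is purely order-algebraic; R = the reals is an instance). *)
From HB Require Import structures.
From mathcomp Require Import all_boot all_order all_fingroup all_algebra.
Set Implicit Arguments. Unset Strict Implicit. Unset Printing Implicit Defensive.
Import Order.TTheory GRing.Theory Num.Theory.
Local Open Scope ring_scope.

Definition pt (R : realFieldType) (n p : nat) := ('rV[R]_n * 'rV[R]_p)%type.

Definition conv (R : realFieldType) (n p : nat) (A : pt R n p -> Prop)
  (v : pt R n p) : Prop :=
  exists (m : nat) (lam : 'I_m -> R) (pts : 'I_m -> pt R n p),
    [/\ forall i, 0 <= lam i,
        \sum_(i < m) lam i = 1,
        forall i, A (pts i),
        v.1 = \sum_(i < m) lam i *: (pts i).1 &
        v.2 = \sum_(i < m) lam i *: (pts i).2].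

(* P x for the permutation matrix of s: (P x)_i = x_{s i}. *)
Definition permute (R : realFieldType) (n : nat) (s : 'S_n) (x : 'rV[R]_n)
  : 'rV[R]_n := col_perm s x.

Definition perm_invariant (R : realFieldType) (n p : nat)
  (S : pt R n p -> Prop) : Prop :=
  forall (x : 'rV[R]_n) (z : 'rV[R]_p) (s : 'S_n), S (x, z) -> S (permute s x, z).

Definition nonincreasing (R : realFieldType) (n : nat) (u : 'rV[R]_n) : Prop :=
  forall i j : 'I_n, (i <= j)%N -> u ord0 j <= u ord0 i.

(* The components of x sorted in nonincreasing order: (dsort x)`_i = x_[i+1]. *)
Definition dsort (R : realFieldType) (n : nat) (x : 'rV[R]_n) : seq R :=
  sort (fun a b : R => b <= a) [seq x ord0 i | i <- enum 'I_n].

Definition majorizes (R : realFieldType) (n : nat) (x y : 'rV[R]_n) : Prop :=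
  (forall j : nat, (1 <= j <= n.-1)%N ->
     \sum_(i < j) (dsort y)`_i <= \sum_(i < j) (dsort x)`_i) /\
  \sum_(i < n) (dsort x)`_i = \sum_(i < n) (dsort y)`_i.

(* Main.v *)
Require Import Defs.
From HB Require Import structures.
From mathcomp Require Import all_boot all_order all_fingroup all_algebra.
From mathcomp Require Import ring lra.
Import Order.TTheory GRing.Theory Num.Theory.
Set Implicit Arguments. Unset Strict Implicit.
Local Open Scope ring_scope.


Lemma dsort_perm (R : realFieldType) (n : nat) (x : 'rV[R]_n) :
  exists s : 'S_n, forall i : 'I_n, (dsort x)`_i = x ord0 (s i).
Proof.
have hp : perm_eq (dsort x) [tuple x ord0 i | i < n].
  rewrite /dsort perm_sort /= /mktuple /= -map_comp.
  by [].
case/tuple_permP: hp => s hs; exists s => i.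
rewrite hs /= (nth_map i) ?size_enum_ord // nth_ord_enum tnth_map tnth_ord_tuple.
by [].
Qed.

Lemma size_dsort (R : realFieldType) (n : nat) (x : 'rV[R]_n) : size (dsort x) = n.
Proof. by rewrite /dsort size_sort size_map size_enum_ord. Qed.

Lemma dsort_sorted (R : realFieldType) (n : nat) (x : 'rV[R]_n) (i k : 'I_n) :
  (i <= k)%N -> (dsort x)`_k <= (dsort x)`_i.
Proof.
move=> hik.
have ht : transitive (fun a b : R => b <= a) by move=> a b c h1 h2; exact: le_trans h2 h1.
have hr : reflexive (fun a b : R => b <= a) by move=> a; exact: lexx.
have hs : sorted (fun a b : R => b <= a) (dsort x).
  by apply: sort_sorted => a b; exact: le_total.
apply: (sorted_leq_nth ht hr 0 hs) => //; by rewrite inE size_dsort.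
Qed.

Lemma sum_perm (R : realFieldType) (n : nat) (f : 'I_n -> R) (s : 'S_n) :
  \sum_i f (s i) = \sum_i f i.
Proof. by rewrite [RHS](reindex_inj (@perm_inj _ s)). Qed.

Lemma topsum (R : realFieldType) (n : nat) (d : 'I_n -> R) (s : 'S_n) (j : nat) :
  (forall i k : 'I_n, (i <= k)%N -> d k <= d i) ->
  \sum_(i < n | (i < j)%N) d (s i) <= \sum_(i < n | (i < j)%N) d i.
Proof.
move=> hd; case: (ltnP j n) => hj; last first.
  rewrite (eq_bigl xpredT); last by move=> i; rewrite (leq_trans (ltn_ord i) hj).
  rewrite [X in _ <= X](eq_bigl xpredT); last by move=> i; rewrite (leq_trans (ltn_ord i) hj).
  by rewrite sum_perm.
pose t := d (Ordinal hj).
have e1 : forall P : pred 'I_n, \sum_(i | P i) d i = \sum_(i | P i) (d i - t) + \sum_(i | P i) t.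
  by move=> P; rewrite -big_split /=; apply: eq_bigr => i _; rewrite subrK.
rewrite (reindex_inj (@perm_inj _ s^-1)) /=.
rewrite (eq_bigr (fun i => d i)); last by move=> i _; rewrite permKV.
rewrite e1 [X in _ <= X]e1.
have -> : \sum_(i : 'I_n | ((s^-1)%g i < j)%N) t = \sum_(i : 'I_n | (i < j)%N) t.
  by rewrite (reindex_inj (@perm_inj _ s)) /=; apply: eq_bigl => i; rewrite permK.
rewrite lerD2r big_mkcond [X in _ <= X]big_mkcond /=.
apply: ler_sum => i _.
case: ifP => h1; case: ifP => h2 //.
- by rewrite subr_le0; apply: hd; rewrite leqNgt h2.
- by rewrite subr_ge0; apply: hd; rewrite /= -ltnS ltnS; apply: ltnW.
Qed.



Definition inC (R : realFieldType) (n : nat) (a b : 'I_n -> R) : Prop :=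
  exists mu : 'S_n -> R, [/\ forall s, 0 <= mu s, \sum_s mu s = 1 &
     forall i, b i = \sum_s mu s * a (s i)].

Lemma inC_refl (R : realFieldType) (n : nat) (a b : 'I_n -> R) :
  (forall i, b i = a i) -> inC a b.
Proof.
move=> hab.
exists (fun s => (s == 1%g)%:R); split.
- by move=> s; rewrite ler0n.
- rewrite (bigD1 1%g) //= eqxx big1 ?addr0 // => s /negbTE ->; by [].
- move=> i; rewrite hab (bigD1 1%g) //= eqxx mul1r perm1 big1 ?addr0 //.
  by move=> s /negbTE ->; rewrite mul0r.
Qed.

Lemma sum_ind (R : realFieldType) (n : nat) (P : pred 'I_n) (f : 'I_n -> R) (k : 'I_n) :
  \sum_(i | P i) (f i * (i == k)%:R) = f k * (P k)%:R.
Proof.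
rewrite big_mkcond (bigD1 k) //= eqxx big1 ?addr0.
  by case: (P k); rewrite ?mulr1 ?mulr0.
by move=> i /negbTE ->; rewrite mulr0 if_same.
Qed.

Lemma sumG (R : realFieldType) (n : nat) (a b : 'I_n -> R) (k : 'I_n) (j : nat) :
  (k < j)%N -> (forall i : 'I_n, (i < k)%N -> a i = b i) ->
  (forall i : 'I_n, (k < i)%N -> (i < j)%N -> b i <= a i) ->
  a k - b k <= \sum_(i < n | (i < j)%N) (a i - b i).
Proof.
move=> hkj h1 h2.
rewrite (bigD1 k) //= lerDl; apply: sumr_ge0 => i /andP[hij hik].
case: (ltngtP i k) => h.
- by rewrite h1 // subrr.
- by rewrite subr_ge0 h2.
- by move: hik; rewrite (val_inj h) eqxx.
Qed.

Lemma sumE (R : realFieldType) (n : nat) (a b : 'I_n -> R) (k : 'I_n) :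
  (forall i : 'I_n, (i < k)%N -> a i = b i) ->
  \sum_(i < n | (i < k.+1)%N) (a i - b i) = a k - b k.
Proof.
move=> h1; rewrite (bigD1 k) //= big1 ?addr0 // => i /andP[hij hik].
rewrite h1 ?subrr //; rewrite ltnS leq_eqVlt in hij.
case/orP: hij => // /eqP h; by move: hik; rewrite (val_inj h) eqxx.
Qed.



Lemma rado (R : realFieldType) (n : nat) (b : 'I_n -> R)
  (hb : forall i k : 'I_n, (i <= k)%N -> b k <= b i) (N : nat) :
  forall a : 'I_n -> R, (#|[set i | a i != b i]| <= N)%N ->
  (forall j, \sum_(i < n | (i < j)%N) b i <= \sum_(i < n | (i < j)%N) a i) ->
  \sum_i b i = \sum_i a i -> inC a b.
Proof.
elim: N => [|N IH] a hN hpre htot.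
  apply: inC_refl => i; apply/esym/eqP; apply/negPn/negP => h.
  move: hN; rewrite leqn0 cards_eq0 => /eqP/setP/(_ i).
  by rewrite !inE h.
case: (pickP (fun i => a i != b i)) => [i0 hi0 | hno]; last first.
  by apply: inC_refl => i; apply/esym/eqP; move/negbT: (hno i); rewrite negbK.
pose k := [arg min_(i < i0 | a i != b i) val i].
have [hk kmin] : a k != b k /\ forall i, a i != b i -> (k <= i)%N.
  by rewrite /k; case: arg_minnP => // x hx hmin; split.
have hlt : forall i : 'I_n, (i < k)%N -> a i = b i.
  move=> i hi; apply/eqP; apply/negPn/negP => h.
  by move: (kmin i h); rewrite leqNgt hi.
have hkpos : b k < a k.
  rewrite lt_neqAle eq_sym hk /= -subr_ge0 -(sumE hlt) sumrB subr_ge0.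
  exact: hpre.
case: (pickP (fun i : 'I_n => (k < i)%N && (a i < b i))) => [l0 hl0 | hno]; last first.
  exfalso.
  have : a k - b k <= \sum_(i < n | (i < n)%N) (a i - b i).
    apply: sumG => // i hki _; move/negbT: (hno i); rewrite hki /= -leNgt; by [].
  have hn : forall f : 'I_n -> R, \sum_(i < n | (i < n)%N) f i = \sum_i f i.
    by move=> f; apply: eq_bigl => i; rewrite ltn_ord.
  rewrite sumrB !hn htot subrr.
  by rewrite subr_le0 leNgt hkpos.
pose l := [arg min_(i < l0 | (k < i)%N && (a i < b i)) val i].
have [hkl hl lmin] : [/\ (k < l)%N, a l < b l &
     forall i : 'I_n, (k < i)%N -> a i < b i -> (l <= i)%N].
  rewrite /l; case: arg_minnP => // x /andP[hx1 hx2] hmin; split => //.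
  by move=> i h1 h2; apply: hmin; rewrite h1.
have hmid : forall i : 'I_n, (k < i)%N -> (i < l)%N -> b i <= a i.
  move=> i h1 h2; rewrite leNgt; apply/negP => h.
  by move: (lmin i h1 h); rewrite leqNgt h2.
have hbkl : b l <= b k by apply: hb; apply: ltnW.
have hkl' : k != l by rewrite neq_ltn hkl.
pose d := if a k - b k <= b l - a l then a k - b k else b l - a l.
have [hd0 hd1 hd2 hd3] : [/\ 0 < d, d <= a k - b k, d <= b l - a l &
     (d == a k - b k) || (d == b l - a l)].
  rewrite /d; case: ifP => h.
    by split; rewrite ?subr_gt0 ?lexx ?eqxx.
  split; rewrite ?subr_gt0 ?lexx ?eqxx ?orbT //.
  by apply: ltW; rewrite ltNge h.
have hakl : d <= a k - a l by lra.
have hakl0 : 0 < a k - a l by lra.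
pose c := d / (a k - a l).
have hc0 : 0 <= c by rewrite /c divr_ge0 // ?ltW.
have hc1 : c <= 1 by rewrite /c ler_pdivrMr // mul1r.
have hcd : c * (a k - a l) = d by rewrite /c divfK // gt_eqF.
pose t := tperm k l.
pose a' := fun i => (1 - c) * a i + c * a (t i).
have ha' : forall i, a' i = a i - d * (i == k)%:R + d * (i == l)%:R.
  move=> i; rewrite /a' /t; case: (eqVneq i k) => [->|hik].
    rewrite tpermL ?eqxx (negbTE hkl') mulr1 mulr0 addr0 -hcd; ring.
  case: (eqVneq i l) => [->|hil].
    rewrite tpermR mulr1 mulr0 subr0 -hcd; ring.
  rewrite tpermD 1?eq_sym //=; ring.
have hsum : forall P : pred 'I_n, \sum_(i | P i) a' i =
    \sum_(i | P i) a i - d * (P k)%:R + d * (P l)%:R.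
  move=> P; rewrite (eq_bigr _ (fun i _ => ha' i)) big_split sumrB /=.
  by rewrite (sum_ind P (fun=> d) k) (sum_ind P (fun=> d) l) mulrC [d * _]mulrC.
pose w := if d == a k - b k then k else l.
have hw : a' w = b w.
  rewrite /w; case: ifP => hdk.
    rewrite ha' eqxx (negbTE hkl') /= (eqP hdk); ring.
  move: hd3; rewrite hdk /= => /eqP hdl.
  rewrite ha' eqxx eq_sym (negbTE hkl') /= hdl; ring.
have hA : forall i, a' i != b i -> a i != b i.
  move=> i hi; case: (eqVneq i k) => [->//|hik].
  case: (eqVneq i l) => [->|hil]; first by rewrite lt_eqF.
  by move: hi; rewrite ha' (negbTE hik) (negbTE hil) /= !mulr0 subr0 addr0.
have hcard : (#|[set i | a' i != b i]| <= N)%N.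
  have hwA : w \in [set i | a i != b i].
    by rewrite inE /w; case: ifP => _ //; rewrite lt_eqF.
  have hsub : [set i | a' i != b i] \subset [set i | a i != b i] :\ w.
    apply/subsetP => i; rewrite !inE => hi; rewrite hA // andbT.
    by apply/eqP => e; move: hi; rewrite e hw eqxx.
  move: (subset_leq_card hsub) hN; rewrite (cardsD1 w [set i | a i != b i]) hwA.
  by rewrite add1n ltnS => h1 h2; exact: leq_trans h1 h2.
have hpre' : forall j, \sum_(i < n | (i < j)%N) b i <= \sum_(i < n | (i < j)%N) a' i.
  move=> j; rewrite (hsum (fun i : 'I_n => (i < j)%N)) /=.
  case hkj: (k < j)%N; case hlj: (l < j)%N => /=.
  - by rewrite !mulr1 subrK.
  - have hjl : (j <= l)%N by rewrite leqNgt hlj.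
    have := sumG hkj hlt (fun i h1 h2 => hmid i h1 (leq_trans h2 hjl)).
    rewrite sumrB /= mulr1 mulr0 addr0 => h; lra.
  - by move: hkj; rewrite (ltn_trans hkl hlj).
  - by rewrite !mulr0 subr0 addr0.
have htot' : \sum_i b i = \sum_i a' i.
  by rewrite (hsum (fun _ => true)) /= mulr1 subrK.
have [mu [hmu0 hmu1 hmub]] := IH a' hcard hpre' htot'.
have hre : forall F : 'S_n -> R, \sum_s F (s * t^-1)%g = \sum_s F s.
  by move=> F; rewrite (reindex_inj (mulIg t)) /=; apply: eq_bigr => s _; rewrite mulgK.
exists (fun s => (1 - c) * mu s + c * mu (s * t^-1)%g); split.
- move=> s; apply: addr_ge0; apply: mulr_ge0 => //; by rewrite subr_ge0.
- rewrite big_split /= -!mulr_sumr (hre mu) hmu1; ring.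
- move=> i; rewrite hmub.
  have -> : \sum_s mu s * a' (s i) =
     (1 - c) * \sum_s mu s * a (s i) + c * \sum_s mu s * a (t (s i)).
    rewrite !mulr_sumr -big_split /=; apply: eq_bigr => s _; rewrite /a'; ring.
  have -> : \sum_s ((1 - c) * mu s + c * mu (s * t^-1)%g) * a (s i) =
     (1 - c) * \sum_s mu s * a (s i) + c * \sum_s mu (s * t^-1)%g * a (s i).
    rewrite !mulr_sumr -big_split /=; apply: eq_bigr => s _; ring.
  congr (_ + _ * _).
  rewrite -(hre (fun s => mu s * a (t (s i)))) /=.
  apply: eq_bigr => s _; by rewrite permM permKV.
Qed.



Lemma sum_enum (R : realFieldType) (V : nmodType) (T : finType) (F : T -> V) :
  \sum_(t : T) F t = \sum_(i < #|T|) F (enum_val (i : 'I_#|T|)).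
Proof. by rewrite -big_enum_val; apply: eq_bigl => t; rewrite inE. Qed.

Lemma conv_fin (R : realFieldType) (n p : nat) (T : finType) (A : pt R n p -> Prop)
  (v : pt R n p) (lam : T -> R) (pts : T -> pt R n p) :
  (forall t, 0 <= lam t) -> \sum_t lam t = 1 -> (forall t, A (pts t)) ->
  v.1 = \sum_t lam t *: (pts t).1 -> v.2 = \sum_t lam t *: (pts t).2 -> conv A v.
Proof.
move=> h0 h1 hA h2 h3.
exists #|T|, (fun i => lam (enum_val i)), (fun i => pts (enum_val i)); split => //.
- by rewrite -(sum_enum R).
- by rewrite h2 (sum_enum R).
- by rewrite h3 (sum_enum R).
Qed.



Lemma dir1 (R : realFieldType) (n p : nat)
  (S : pt R n p -> Prop) (hS : perm_invariant S) (x : 'rV[R]_n) (z : 'rV[R]_p) :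
  conv S (x, z) -> exists u : 'rV[R]_n,
    conv (fun v : pt R n p => S v /\ nonincreasing v.1) (u, z) /\ majorizes u x.
Proof.
case=> m [lam [pts [h0 h1 hS' /= hx /= hz]]].
have [sig hsig] := fin_all_exists (fun i => dsort_perm (pts i).1).
pose uu i := permute (sig i) (pts i).1.
have huu : forall i k, uu i ord0 k = (dsort (pts i).1)`_k.
  by move=> i k; rewrite /uu /permute mxE hsig.
have hnon : forall i, nonincreasing (uu i).
  by move=> i a b hab; rewrite !huu; apply: dsort_sorted.
pose u := \sum_i lam i *: uu i.
have hue : forall k, u ord0 k = \sum_i lam i * uu i ord0 k.
  by move=> k; rewrite /u summxE; apply: eq_bigr => i _; rewrite mxE.
have hxe : forall k, x ord0 k = \sum_i lam i * (pts i).1 ord0 k.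
  by move=> k; rewrite hx summxE; apply: eq_bigr => i _; rewrite mxE.
have hyu : forall i k, (pts i).1 ord0 k = uu i ord0 ((sig i)^-1 k)%g.
  by move=> i k; rewrite /uu /permute mxE permKV.
exists u; split.
  exists m, lam, (fun i => (uu i, (pts i).2)); split => // i; split => //=.
  by apply: hS; case: (pts i) (hS' i).
have [sx hsx] := dsort_perm x.
have [su hsu] := dsort_perm u.
have hD : forall j, \sum_(k < n | (k < j)%N) (dsort x)`_k <= \sum_(k < n | (k < j)%N) (dsort u)`_k.
  move=> j.
  have -> : \sum_(k < n | (k < j)%N) (dsort x)`_k = \sum_(k < n | (k < j)%N) x ord0 (sx k).
    by apply: eq_bigr => k _; rewrite hsx.
  apply: (@le_trans _ _ (\sum_(k < n | (k < j)%N) u ord0 k)).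
    under eq_bigr => k _ do rewrite hxe.
    under [X in _ <= X]eq_bigr => k _ do rewrite hue.
    rewrite exchange_big [X in _ <= X]exchange_big /=.
    apply: ler_sum => i _; rewrite -!mulr_sumr; apply: ler_wpM2l => //.
    under eq_bigr => k _ do rewrite hyu -permM.
    exact: topsum (hnon i).
  have -> : \sum_(k < n | (k < j)%N) u ord0 k =
      \sum_(k < n | (k < j)%N) (dsort u)`_((su^-1)%g k).
    by apply: eq_bigr => k _; rewrite hsu permKV.
  apply: topsum => a b hab; exact: dsort_sorted.
split.
  move=> j /andP[_ hj].
  have hjn : (j <= n)%N by apply: (leq_trans hj); apply: leq_pred.
  by rewrite !(big_ord_widen n (fun k => (dsort _)`_k) hjn); apply: hD.
have -> : \sum_(k < n) (dsort u)`_k = \sum_k u ord0 k.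
  by rewrite -(sum_perm (fun k => u ord0 k) su); apply: eq_bigr => k _; rewrite hsu.
have -> : \sum_(k < n) (dsort x)`_k = \sum_k x ord0 k.
  by rewrite -(sum_perm (fun k => x ord0 k) sx); apply: eq_bigr => k _; rewrite hsx.
under eq_bigr => k _ do rewrite hue.
under [X in _ = X]eq_bigr => k _ do rewrite hxe.
rewrite exchange_big [X in _ = X]exchange_big /=.
apply: eq_bigr => i _; rewrite -!mulr_sumr; congr (_ * _).
by rewrite -(sum_perm (fun k => (pts i).1 ord0 k) (sig i)); apply: eq_bigr => k _; rewrite huu hsig.
Qed.



Lemma dir2 (R : realFieldType) (n p : nat)
  (S : pt R n p -> Prop) (hS : perm_invariant S) (x : 'rV[R]_n) (z : 'rV[R]_p)
  (u : 'rV[R]_n) :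
  conv (fun v : pt R n p => S v /\ nonincreasing v.1) (u, z) -> majorizes u x ->
  conv S (x, z).
Proof.
case=> m [lam [pts [h0 h1 hS0 /= hu /= hz]]] [hmaj1 hmaj2].
have [sx hsx] := dsort_perm x.
have [su hsu] := dsort_perm u.
pose b (k : 'I_n) := (dsort x)`_k.
pose a (k : 'I_n) := (dsort u)`_k.
have hb : forall i k : 'I_n, (i <= k)%N -> b k <= b i.
  by move=> i k hik; apply: dsort_sorted.
have hfull : forall (y : 'rV[R]_n) j, (n <= j)%N ->
    \sum_(k < n | (k < j)%N) (dsort y)`_k = \sum_(k < n) (dsort y)`_k.
  by move=> y j hj; apply: eq_bigl => k; rewrite (leq_trans (ltn_ord k) hj).
have hpre : forall j, \sum_(i < n | (i < j)%N) b i <= \sum_(i < n | (i < j)%N) a i.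
  move=> j; rewrite /a /b.
  case: (posnP j) => [->|hj0].
    by rewrite !big_pred0 // => k; rewrite ltn0.
  case: (ltnP j n) => hjn; last by rewrite !hfull // hmaj2.
  have hjn' : (j <= n)%N by apply: ltnW.
  rewrite -!(big_ord_widen n (fun k => (dsort _)`_k) hjn').
  apply: hmaj1; rewrite hj0 /=; by rewrite -ltnS prednK // (leq_trans _ hjn).
have htot : \sum_i b i = \sum_i a i by rewrite /a /b hmaj2.
have [mu [hmu0 hmu1 hmub]] := rado hb (leqnn _) hpre htot.
have hue : forall k, u ord0 k = \sum_i lam i * (pts i).1 ord0 k.
  by move=> k; rewrite hu summxE; apply: eq_bigr => i _; rewrite mxE.
have hze : forall k, z ord0 k = \sum_i lam i * (pts i).2 ord0 k.
  by move=> k; rewrite hz summxE; apply: eq_bigr => i _; rewrite mxE.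
pose rho (s : 'S_n) := ((sx^-1) * s * su)%g.
apply: (conv_fin (T := ('S_n * 'I_m)%type)
  (lam := fun q => mu q.1 * lam q.2)
  (pts := fun q => (permute (rho q.1) (pts q.2).1, (pts q.2).2))).
- by move=> q; apply: mulr_ge0.
- rewrite -(pair_bigA _ (fun s i => mu s * lam i)) /=.
  under eq_bigr => s _ do rewrite -mulr_sumr h1 mulr1.
  exact: hmu1.
- move=> [s i] /=; apply: hS; case: (pts i) (hS0 i) => ? ? []; by [].
- apply/rowP => k /=; rewrite summxE.
  rewrite -(pair_bigA _ (fun s i => ((mu s * lam i) *: permute (rho s) (pts i).1) ord0 k)) /=.
  have -> : x ord0 k = b ((sx^-1)%g k) by rewrite /b hsx permKV.
  rewrite hmub; apply: eq_bigr => s _.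
  rewrite /a hsu hue mulr_sumr; apply: eq_bigr => i _.
  by rewrite /permute !mxE /rho !permM mulrA.
- apply/rowP => k /=; rewrite summxE.
  rewrite -(pair_bigA _ (fun s i => ((mu s * lam i) *: (pts i).2) ord0 k)) /=.
  under eq_bigr => s _ do under eq_bigr => i _ do rewrite mxE -mulrA.
  under eq_bigr => s _ do rewrite -mulr_sumr -hze.
  by rewrite -mulr_suml hmu1 mul1r.
Qed.


Theorem theorem1 (R : realFieldType) (n p : nat) (hn : (1 <= n)%N)
  (S : pt R n p -> Prop) (hS : perm_invariant S) :
  let S0 := fun v : pt R n p => S v /\ nonincreasing v.1 in
  forall (x : 'rV[R]_n) (z : 'rV[R]_p),
    conv S (x, z) <-> exists u : 'rV[R]_n, conv S0 (u, z) /\ majorizes u x.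
Proof.
move=> S0 x z; split; first exact: dir1.
by case=> u [h1 h2]; apply: dir2 h1 h2.
Qed.
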